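(* Let $G,H$ be graphs such that $G$ is connected, has at least five vertices and has no vertices of degree two. Let $\mathcal D$ be a weak disk system in $G$, let $S$ be a subgraph of $H$ isomorphic to a subdivision of $G$, let $\mathcal D'$ be the weak disk system induced in $S$ by $\mathcal D$, and suppose $H$ has an $S$-triad (with respect to $\mathcal D'$). Then $H$ has a minor isomorphic to a 1-enlargement or a 3-enlargement of $G$, or to a weak 8-enlargement or a weak 9-enlargement of $G$ (all with respect to $\mathcal D$).
   Context: Graphs are finite and simple; paths and cycles have no repeated vertices. A segment is a maximal path whose internal vertices have degree exactly two; if $S$ is a subdivision of a graph $G$ without degree-two vertices, the segments of $S$ are the paths replacing edges of $G$ and the branch-vertices are the vertices corresponding to $V(G)$. A cycle double cover of $G$ is a set $\mathcal D$ of distinct cycles (disks) with each edge in exactly two disks; it is a weak disk system if any two distinct disks intersect in at most one vertex or in a segment. Two elements (vertices or edges) are confluent if some disk contains both. The weak disk system induced in a subdivision $S$ of $G$ is obtained by replacing each edge of each disk by its segment. An $S$-triad in $H$ consists of a vertex $x\in V(H)-V(S)$ and three paths $L_1,L_2,L_3$ with common end $x$, having no internal vertices in common with each other or with $S$, where $L_i$ ends at $x_i\in V(S)$, and $x_1,x_2,x_3$ are distinct vertices that are pairwise confluent but not all three contained in one disk of $\mathcal D'$. Splitting: for a vertex $v$ of degree $\ge4$ and a partition $(N_1,N_2)$ of its neighbours with $|N_1|,|N_2|\ge2$, replace $v$ by adjacent new vertices $v_1,v_2$ with $v_i$ adjacent to $N_i$. The split is conforming (w.r.t. $\mathcal D$)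 if (S1) among the disks containing $v$ exactly two, $D_1,D_2$, have their two neighbours of $v$ one in $N_1$ and one in $N_2$, and (S2) $D_1\cap D_2=\{v\}$; otherwise non-conforming. A 1-enlargement of $G$ is obtained by adding an edge between two non-confluent vertices. A 3-enlargement is obtained by a non-conforming split of a vertex. A weak 8-enlargement is obtained by adding a new vertex adjacent to three vertices $x_1,x_2,x_3$ of $G$ not all contained in one disk. A weak 9-enlargement is obtained, for an edge $xy$ and a vertex $u$ such that no disk contains both $u$ and the edge $xy$, by subdividing $xy$ with a new vertex and joining it to $u$. *)

(* Defs.v *)
From mathcomp Require Import all_boot.
Set Implicit Arguments. Unset Strict Implicit. Unset Printing Implicit Defensive.

Section Graphs.
Variable T : finType.

Definition sgraph (e : rel T) := symmetric e /\ irreflexive e.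

Definition deg (e : rel T) (v : T) : nat := #|[set u | e v u]|.

Definition restr (B : {set T}) (e : rel T) : rel T :=
  fun a b => [&& a \in B, b \in B & e a b].

(* edges of G are represented as two-element vertex sets [set u; v] *)
Definition cycle_edges (s : seq T) : {set {set T}} :=
  [set [set x; next s x] | x in s].

Definition is_cycle (e : rel T) (C : {set {set T}}) : Prop :=
  exists s : seq T, [/\ uniq s, 2 < size s, cycle e s & C = cycle_edges s].

Definition cverts (C : {set {set T}}) : {set T} := \bigcup_(f in C) f.

Definition cdc (e : rel T) (D : {set {set {set T}}}) : Prop :=
  (forall C, C \in D -> is_cycle e C) /\
  (forall u v, e u v -> #|[set C in D | [set u; v] \in C]| = 2).

(* weak disk system.  Segments of a graph without degree-two vertices are
   exactly its single edges, so "intersect in a segment" means: the common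
   subgraph is one edge uv together with its ends. *)
Definition weak_disk_system (e : rel T) (D : {set {set {set T}}}) : Prop :=
  cdc e D /\
  (forall C1 C2, C1 \in D -> C2 \in D -> C1 != C2 ->
     #|cverts C1 :&: cverts C2| <= 1 \/
     exists u v, e u v /\ cverts C1 :&: cverts C2 = [set u; v] /\
                 C1 :&: C2 = [set [set u; v]]).

Definition confluent (D : {set {set {set T}}}) (a b : T) : bool :=
  [exists C in D, (a \in cverts C) && (b \in cverts C)].

(* 1-enlargement: add edge ab *)
Definition add_edge (e : rel T) (a b : T) : rel T :=
  fun x y => [|| e x y, (x == a) && (y == b) | (x == b) && (y == a)].

(* splitting of v: Some v plays v1 (adjacent to N1), None plays v2
   (adjacent to N2 = N(v) \ N1), v1 v2 adjacent *)
Definition split_rel (e : rel T) (v : T) (N1 : {set T}) : rel (option T) :=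
  fun p q =>
    match p, q with
    | Some x, Some y =>
        if x == v then (y \in N1) && e v y
        else if y == v then (x \in N1) && e v x
        else e x y
    | Some x, None => (x == v) || (e v x && (x \notin N1))
    | None, Some y => (y == v) || (e v y && (y \notin N1))
    | None, None => false
    end.

Definition splits (e : rel T) (v : T) (N1 : {set T}) (C : {set {set T}}) :=
  [exists u, ([set v; u] \in C) && (u \in N1)] &&
  [exists u, [&& [set v; u] \in C, e v u & u \notin N1]].

Definition conforming (e : rel T) (D : {set {set {set T}}}) (v : T)
    (N1 : {set T}) : Prop :=
  exists D1 D2, D1 != D2 /\
    [set C in D | (v \in cverts C) && splits e v N1 C] = [set D1; D2] /\
    cverts D1 :&: cverts D2 = [set v].

(* weak 8-enlargement: new vertex None adjacent to x1 x2 x3 *)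
Definition rel8 (e : rel T) (x1 x2 x3 : T) : rel (option T) :=
  fun p q =>
    match p, q with
    | Some a, Some b => e a b
    | Some a, None => a \in [:: x1; x2; x3]
    | None, Some b => b \in [:: x1; x2; x3]
    | None, None => false
    end.

(* weak 9-enlargement: subdivide xy by new vertex None, join it to u *)
Definition rel9 (e : rel T) (x y u : T) : rel (option T) :=
  fun p q =>
    match p, q with
    | Some a, Some b => e a b && ([set a; b] != [set x; y])
    | Some a, None => a \in [:: x; y; u]
    | None, Some b => b \in [:: x; y; u]
    | None, None => false
    end.
End Graphs.

Definition minor_model (TK TH : finType) (eK : rel TK) (eH : rel TH)
    (beta : TK -> {set TH}) : Prop :=
  [/\ forall k, beta k != set0,
      forall k k', k != k' -> [disjoint beta k & beta k'],
      forall k, {in beta k &, forall x y, connect (restr (beta k) eH) x y} &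
      forall k k', eK k k' ->
        exists x y, [/\ x \in beta k, y \in beta k' & eH x y]].

Definition has_minor (TH TK : finType) (eH : rel TH) (eK : rel TK) : Prop :=
  exists beta : TK -> {set TH}, minor_model eK eH beta.

Section Subdivision.
Variables (TG TH : finType) (eG : rel TG) (eH : rel TH).

(* S = union of the branch vertices phi u and the H-paths
   phi u, Q u v, phi v replacing each edge uv of G: S is a subgraph of H
   isomorphic to a subdivision of G. *)
Definition subdiv_model (phi : TG -> TH) (Q : TG -> TG -> seq TH) : Prop :=
  [/\ injective phi,
      forall u v, eG u v ->
        path eH (phi u) (rcons (Q u v) (phi v)) &&
        uniq (phi u :: rcons (Q u v) (phi v)),
      forall u v, eG u v -> Q v u = rev (Q u v),
      forall u v x, eG u v -> x \in Q u v -> x \notin codom phi &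
      forall u v u' v' x, eG u v -> eG u' v' -> [set u; v] != [set u'; v'] ->
        x \in Q u v -> x \notin Q u' v'].

Variables (phi : TG -> TH) (Q : TG -> TG -> seq TH).

Definition Svert (x : TH) : bool :=
  (x \in codom phi) || [exists u, exists v, eG u v && (x \in Q u v)].

Definition segverts (u v : TG) : {set TH} :=
  phi u |: (phi v |: [set x | x \in Q u v]).

(* x lies on the disk of D' induced by disk C of D *)
Definition in_disk' (C : {set {set TG}}) (x : TH) : bool :=
  [exists u, exists v, ([set u; v] \in C) && (x \in segverts u v)].

Definition confluent' (D : {set {set {set TG}}}) (x y : TH) : bool :=
  [exists C in D, in_disk' C x && in_disk' C y].

(* S-triad: centre x, paths L_i = x :: R_i ++ [x_i] *)
Definition S_triad (D : {set {set {set TG}}}) (x x1 x2 x3 : TH)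
    (R1 R2 R3 : seq TH) : Prop :=
  ~~ Svert x /\
  [&& Svert x1, Svert x2 & Svert x3] /\
  uniq [:: x1; x2; x3] /\
  (path eH x (rcons R1 x1) && uniq (x :: rcons R1 x1)) /\
  (path eH x (rcons R2 x2) && uniq (x :: rcons R2 x2)) /\
  (path eH x (rcons R3 x3) && uniq (x :: rcons R3 x3)) /\
  (forall y, y \in R1 ++ R2 ++ R3 -> ~~ Svert y) /\
  uniq (R1 ++ R2 ++ R3) /\
  [&& confluent' D x1 x2, confluent' D x1 x3 & confluent' D x2 x3] /\
  ~~ [exists C in D, [&& in_disk' C x1, in_disk' C x2 & in_disk' C x3]].

Definition has_S_triad (D : {set {set {set TG}}}) : Prop :=
  exists x x1 x2 x3 R1 R2 R3, S_triad D x x1 x2 x3 R1 R2 R3.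
End Subdivision.

(* Main.v *)
Require Import Defs.
From mathcomp Require Import all_boot.
From mathcomp Require Import zify.
Set Implicit Arguments. Unset Strict Implicit. Unset Printing Implicit Defensive.

Section Gen.
Variable T : finType.
Implicit Types (e : rel T) (B : {set T}).

Lemma restr_sym e B : symmetric e -> symmetric (restr B e).
Proof. by move=> se a b; rewrite /restr se andbCA. Qed.

Lemma path_conn e B x s : path e x s -> x \in B -> all (mem B) s ->
  forall y, y \in x :: s -> connect (restr B e) x y.
Proof.
elim: s x => [|z s IH] x /=.
  by move=> _ _ _ y; rewrite inE => /eqP ->.
move=> /andP[exz ps] xB /andP[zB aS] y; rewrite inE => /orP[/eqP->//|ys].
apply: connect_trans (connect1 _) (IH z ps zB aS y ys).
by rewrite /restr xB zB.
Qed.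

Lemma root_conn e B r : symmetric e -> r \in B ->
  (forall y, y \in B -> connect (restr B e) r y) ->
  {in B &, forall x y, connect (restr B e) x y}.
Proof.
move=> se rB h x y xB yB; apply: connect_trans (h y yB).
by rewrite (sym_connect_sym (restr_sym B se)) h.
Qed.

Lemma leave e x y (A : {set T}) : connect e x y -> x \in A -> y \notin A ->
  exists u v, [/\ u \in A, v \notin A & e u v].
Proof.
move=> /connectP[p pp ->] {y}; elim: p x pp => [|z p IH] x /=.
  by move=> _ ->.
move=> /andP[exz pp] xA lA; case: (boolP (z \in A)) => zA.
  exact: IH zA lA.
by exists x, z.
Qed.

End Gen.

Lemma relabel_model (TK TK' TH : finType) (eK : rel TK) (eK' : rel TK') (eH : rel TH)
  (beta : TK -> {set TH}) (f : TK' -> TK) :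
  injective f -> (forall k k', eK' k k' -> eK (f k) (f k')) ->
  minor_model eK eH beta -> minor_model eK' eH (beta \o f).
Proof.
move=> fi fe [h1 h2 h3 h4]; split => //=.
- by move=> k k' kk'; apply: h2; apply: contra kk' => /eqP /fi ->.
- by move=> k k' /fe /h4.
Qed.

Lemma set2_eq (T : finType) (u v a b : T) : [set u; v] = [set a; b] ->
  (u = a /\ v = b) \/ (u = b /\ v = a).
Proof.
move=> E.
have ua : u \in [set a; b] by rewrite -E set21.
have vb : v \in [set a; b] by rewrite -E set22.
have au : a \in [set u; v] by rewrite E set21.
have bu : b \in [set u; v] by rewrite E set22.
move: ua vb au bu => /set2P[]-> /set2P[]-> /set2P[] ? /set2P[] ?; subst; auto.
Qed.

Lemma index_rev (T : eqType) (s : seq T) h : uniq s -> h \in s ->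
  index h (rev s) = size s - (index h s).+1.
Proof.
move=> us hs; set i := index h s.
have ilt : i < size s by rewrite index_mem.
have -> : h = nth h (rev s) (size s - i.+1).
  rewrite nth_rev; last by lia.
  have -> : size s - (size s - i.+1).+1 = i by lia.
  by rewrite nth_index.
by rewrite index_uniq ?rev_uniq // size_rev; lia.
Qed.

Section Base.
Variables (TG TH : finType) (eG : rel TG) (eH : rel TH).
Variables (phi : TG -> TH) (Q : TG -> TG -> seq TH).
Hypothesis sm : subdiv_model eG eH phi Q.
Hypothesis seH : symmetric eH.
Hypothesis seG : symmetric eG.

Lemma Q_path u v : eG u v -> path eH (phi u) (rcons (Q u v) (phi v)).
Proof. by case: sm => _ h _ _ _ /h /andP[]. Qed.

Lemma Q_uniq u v : eG u v -> uniq (Q u v).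
Proof.
case: sm => _ h _ _ _ /h /andP[_] /= /andP[_]; rewrite rcons_uniq => /andP[].
done.
Qed.

Lemma Q_rev u v : eG u v -> Q v u = rev (Q u v).
Proof. by case: sm => _ _ h _ _ /h. Qed.

Lemma Q_cod u v x : eG u v -> x \in Q u v -> x \notin codom phi.
Proof. by case: sm => _ _ _ h _ /h; apply. Qed.

Lemma Q_phi u v w : eG u v -> phi w \in Q u v -> False.
Proof. by move=> euv /(Q_cod euv); rewrite codom_f. Qed.

Lemma Q_disj u v u' v' x : eG u v -> eG u' v' -> x \in Q u v -> x \in Q u' v' ->
  [set u; v] = [set u'; v'].
Proof.
case: sm => _ _ _ _ h e1 e2 x1 x2; apply/eqP; apply: contraT => ne.
by move: (h _ _ _ _ _ e1 e2 ne x1); rewrite x2.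
Qed.

Lemma phi_inj : injective phi.
Proof. by case: sm. Qed.

Variable cut : TG -> TG -> nat.
Hypothesis Hcut : forall u v, eG u v -> cut u v + cut v u = size (Q u v).

Definition bset u : {set TH} :=
  phi u |: [set h | [exists v, eG u v && (h \in take (cut u v) (Q u v))]].

Lemma bsetP u h : reflect (h = phi u \/ exists2 v, eG u v & h \in take (cut u v) (Q u v))
  (h \in bset u).
Proof.
rewrite /bset; apply: (iffP setU1P) => [[->|]|[->|[v ev hv]]]; [by left| |by left|].
  by rewrite inE => /existsP[v /andP[ev hv]]; right; exists v.
by right; rewrite inE; apply/existsP; exists v; rewrite ev.
Qed.

Lemma bset_phi u : phi u \in bset u.
Proof. by apply/bsetP; left. Qed.

Lemma bset_Svert u h : h \in bset u -> Svert eG phi Q h.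
Proof.
case/bsetP=> [->|[v ev hv]]; rewrite /Svert ?codom_f //.
apply/orP; right; apply/existsP; exists u; apply/existsP; exists v.
by rewrite ev (mem_take hv).
Qed.

Lemma bset_disj u u' : u != u' -> [disjoint bset u & bset u'].
Proof.
move=> nu; rewrite -setI_eq0; apply/eqP/setP => h; rewrite inE in_set0.
apply/negbTE/negP => /andP[/bsetP h1 /bsetP h2].
case: h1 h2 => [->|[v ev hv]] [e2|[v' ev' hv']].
- by move/phi_inj: e2 => e2; rewrite e2 eqxx in nu.
- exact: (Q_phi ev' (mem_take hv')).
- by rewrite e2 in hv; exact: (Q_phi ev (mem_take hv)).
have hq := mem_take hv; have hq' := mem_take hv'.
case/set2_eq: (Q_disj ev ev' hq hq') => [[e1 _]|[e1 e2]].
  by rewrite e1 eqxx in nu.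
subst u' v'.
have := Hcut ev; have := hq; rewrite -index_mem.
move: hv hv'; rewrite (Q_rev ev) !in_take ?mem_rev // index_rev ?(Q_uniq ev) //.
move: (index h (Q u v)) (cut u v) (cut v u) (size (Q u v)) => i a b s; lia.
Qed.

Lemma bset_conn u : {in bset u &, forall x y, connect (restr (bset u) eH) x y}.
Proof.
move=> x0 y0 xb yb; apply: (root_conn seH (bset_phi u) _ xb yb).
move=> y /bsetP[->|[v ev hv]]; first exact: connect0.
have pq : path eH (phi u) (take (cut u v) (Q u v)).
  by apply: take_path; move: (Q_path ev); rewrite rcons_path => /andP[].
apply: (path_conn pq (bset_phi u)); last by rewrite inE hv orbT.
by apply/allP => z zt; apply/bsetP; right; exists v.
Qed.

Lemma bset_edge u v : eG u v -> exists x y, [/\ x \in bset u, y \in bset v & eH x y].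
Proof.
move=> ev; have ev' : eG v u by rewrite seG.
set k := cut u v.
have hc := Hcut ev; have kle : k <= size (Q u v) by rewrite /k; lia.
have P := Q_path ev.
rewrite -(cat_take_drop k (Q u v)) -cats1 -catA cat_path in P.
case/andP: P => _ P.
exists (last (phi u) (take k (Q u v))).
case E: (drop k (Q u v)) P => [|y r] /=; rewrite ?andbT => P.
  exists (phi v); split => //; last exact: bset_phi.
  have := mem_last (phi u) (take k (Q u v)); rewrite inE => /orP[/eqP->|hm].
    exact: bset_phi.
  by apply/bsetP; right; exists v.
case/andP: P => P _; exists y; split => //.
  have := mem_last (phi u) (take k (Q u v)); rewrite inE => /orP[/eqP->|hm].
    exact: bset_phi.
  by apply/bsetP; right; exists v.
have ks : k < size (Q u v) by rewrite ltnNge; apply/negP => hk; move: E; rewrite drop_oversize.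
have yE : y = nth y (Q u v) k by move: E; rewrite (drop_nth y ks) => -[].
have yQ : y \in Q u v by rewrite yE mem_nth.
apply/bsetP; right; exists u => //.
rewrite (Q_rev ev) in_take ?mem_rev // index_rev ?(Q_uniq ev) // yE index_uniq ?(Q_uniq ev) //.
have := Hcut ev; rewrite -/k; move: (cut v u) (size (Q u v)) ks => a b; lia.
Qed.

End Base.

Section Cut.
Variables (TG TH : finType) (eG : rel TG) (eH : rel TH).
Variables (phi : TG -> TH) (Q : TG -> TG -> seq TH).
Hypothesis sm : subdiv_model eG eH phi Q.
Hypothesis seG : symmetric eG.
Hypothesis irG : irreflexive eG.

Definition hook (c : TG) (h : TH) := h = phi c \/ exists2 d, eG c d & h \in Q c d.

Variable X : seq (TH * TG).
Hypothesis Hhook : forall p, p \in X -> hook p.2 p.1.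
Hypothesis HDE : forall p q, p \in X -> q \in X -> p != q -> forall d d',
  eG p.2 d -> eG q.2 d' -> p.1 \in Q p.2 d -> q.1 \in Q q.2 d' ->
  [set p.2; d] != [set q.2; d'].

Definition fX u v := [seq p <- X | (p.1 \in Q u v) && ((p.2 == u) || (p.2 == v))].

Definition cutX u v : nat :=
  match fX u v with
  | p :: _ => if p.2 == u then (index p.1 (Q u v)).+1 else index p.1 (Q u v)
  | [::] => if enum_rank u < enum_rank v then size (Q u v) else 0
  end.

Lemma fX_sym u v : eG u v -> fX v u = fX u v.
Proof.
move=> ev; apply: eq_filter => p; rewrite (Q_rev sm ev) mem_rev orbC //.
Qed.

Lemma cutX_sum u v : eG u v -> cutX u v + cutX v u = size (Q u v).
Proof.
move=> ev; have nuv : u != v by apply: contraTneq ev => ->; rewrite irG.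
have ev' : eG v u by rewrite seG.
rewrite /cutX (fX_sym ev).
case E: (fX u v) => [|p r].
  rewrite (Q_rev sm ev) size_rev.
  have : enum_rank u != enum_rank v by apply/eqP => /enum_rank_inj h; rewrite h eqxx in nuv.
  case: (ltngtP (enum_rank u) (enum_rank v)) => h ne.
  - by rewrite addn0.
  - by rewrite add0n.
  - by move/val_inj: h ne => ->; rewrite eqxx.
have : p \in fX u v by rewrite E inE eqxx.
rewrite mem_filter => /andP[/andP[pq pe] _].
have ui := Q_uniq sm ev.
have := pq; rewrite -index_mem => ilt.
rewrite (Q_rev sm ev) index_rev //.
case: eqP pe => [->|_] /=.
  by rewrite (negbTE nuv) => _; move: (index _ _) (size _) ilt => a b; lia.
by move=> ->; move: (index _ _) (size _) ilt => a b; lia.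
Qed.

Lemma hook_in_bset p : p \in X -> p.1 \in bset eG phi Q cutX p.2.
Proof.
move=> pX; case: (Hhook pX) => [->|[d ed hd]]; first exact: bset_phi.
apply/bsetP; right; exists d => //.
have all_p : forall q, q \in fX p.2 d -> q = p.
  move=> q; rewrite mem_filter => /andP[/andP[qQ qe] qX].
  apply/eqP; apply: contraT => nqp.
  case: (Hhook qX) => [qE|[d' ed' hd']].
    by rewrite qE in qQ; case: (Q_phi sm ed qQ).
  have E := Q_disj sm ed' ed hd' qQ.
  by move: (HDE qX pX nqp ed' ed hd' hd); rewrite E eqxx.
rewrite /cutX; case E: (fX p.2 d) => [|q r].
  have : p \in fX p.2 d by rewrite mem_filter hd eqxx pX.
  by rewrite E.
have -> : q = p by apply: all_p; rewrite E inE eqxx.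
by rewrite eqxx in_take // ltnSn.
Qed.

End Cut.

Section W.
Variables (TG TH : finType) (eG : rel TG) (eH : rel TH).
Variables (phi : TG -> TH) (Q : TG -> TG -> seq TH).
Hypothesis sm : subdiv_model eG eH phi Q.
Hypothesis seG : symmetric eG.
Hypothesis irG : irreflexive eG.
Hypothesis seH : symmetric eH.
Variables (x x1 x2 x3 : TH) (R1 R2 R3 : seq TH) (c1 c2 c3 : TG).
Hypothesis nSx : ~~ Svert eG phi Q x.
Hypothesis nSR : forall y, y \in R1 ++ R2 ++ R3 -> ~~ Svert eG phi Q y.
Hypothesis p1 : path eH x (rcons R1 x1).
Hypothesis p2 : path eH x (rcons R2 x2).
Hypothesis p3 : path eH x (rcons R3 x3).
Let X := [:: (x1, c1); (x2, c2); (x3, c3)].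
Hypothesis Hhook : forall p, p \in X -> hook eG phi Q p.2 p.1.
Hypothesis HDE : forall p q, p \in X -> q \in X -> p != q -> forall d d',
  eG p.2 d -> eG q.2 d' -> p.1 \in Q p.2 d -> q.1 \in Q q.2 d' ->
  [set p.2; d] != [set q.2; d'].

Let cut := cutX Q X.
Let N : {set TH} := x |: [set h | h \in R1 ++ R2 ++ R3].
Definition betaW (o : option TG) : {set TH} :=
  match o with Some u => bset eG phi Q cut u | None => N end.

Let Hcut : forall u v, eG u v -> cut u v + cut v u = size (Q u v).
Proof. move=> u v; exact: (cutX_sum sm seG irG). Qed.

Let Rsub (R : seq TH) y : y \in R -> {subset R <= R1 ++ R2 ++ R3} -> y \in N.
Proof. by move=> yR sub; rewrite /N !inE (sub _ yR) orbT. Qed.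

Let tail_adj (R : seq TH) xi ci : path eH x (rcons R xi) ->
  {subset R <= R1 ++ R2 ++ R3} -> (xi, ci) \in X ->
  exists a b, [/\ a \in N, b \in bset eG phi Q cut ci & eH a b].
Proof.
move=> pR sub pX; exists (last x R), xi; split.
- have := mem_last x R; rewrite inE => /orP[/eqP->|]; first by rewrite /N setU11.
  by move=> h; apply: (Rsub h sub).
- exact: (hook_in_bset sm Hhook HDE pX).
- by move: pR; rewrite rcons_path => /andP[].
Qed.

Lemma W_model : minor_model (rel8 eG c1 c2 c3) eH betaW.
Proof.
have s1 : {subset R1 <= R1 ++ R2 ++ R3} by move=> y; rewrite !mem_cat => ->.
have s2 : {subset R2 <= R1 ++ R2 ++ R3} by move=> y; rewrite !mem_cat => ->; rewrite orbT.
have s3 : {subset R3 <= R1 ++ R2 ++ R3} by move=> y; rewrite !mem_cat => ->; rewrite !orbT.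
have NS : forall h, h \in N -> ~~ Svert eG phi Q h.
  by move=> h; rewrite /N !inE => /orP[/eqP->//|]; apply: nSR.
split.
- case=> [u|] /=; apply/set0Pn; first by exists (phi u); exact: bset_phi.
  by exists x; rewrite /N setU11.
- case=> [u|] [u'|] //= ne.
  + by apply: (bset_disj sm Hcut); apply: contraNneq ne => ->.
  + rewrite -setI_eq0; apply/eqP/setP => h; rewrite inE in_set0.
    by apply/negbTE/negP => /andP[/bset_Svert hS /NS]; rewrite hS.
  + rewrite -setI_eq0; apply/eqP/setP => h; rewrite inE in_set0.
    by apply/negbTE/negP => /andP[/NS hn /bset_Svert hS]; rewrite hS in hn.
- case=> [u|] /=; first exact: (bset_conn sm seH).
  move=> a b aN bN; apply: (root_conn seH (setU11 x _) _ aN bN) => y.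
  rewrite /N !inE => /orP[/eqP->|]; first exact: connect0.
  have allN : forall R, {subset R <= R1 ++ R2 ++ R3} -> all (mem N) R.
    by move=> R sub; apply/allP => z zR; exact: (Rsub zR sub).
  rewrite !mem_cat => /orP[yR|/orP[yR|yR]].
  + apply: (path_conn (s := R1)) => //; last by rewrite inE yR orbT.
      by move: p1; rewrite rcons_path => /andP[].
    by rewrite /N setU11.
    exact: allN.
  + apply: (path_conn (s := R2)) => //; last by rewrite inE yR orbT.
      by move: p2; rewrite rcons_path => /andP[].
    by rewrite /N setU11.
    exact: allN.
  + apply: (path_conn (s := R3)) => //; last by rewrite inE yR orbT.
      by move: p3; rewrite rcons_path => /andP[].
    by rewrite /N setU11.
    exact: allN.
- have inX1 : (x1, c1) \in X by rewrite !inE eqxx.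
  have inX2 : (x2, c2) \in X by rewrite !inE eqxx orbT.
  have inX3 : (x3, c3) \in X by rewrite !inE eqxx !orbT.
  have T1 := tail_adj p1 s1 inX1; have T2 := tail_adj p2 s2 inX2.
  have T3 := tail_adj p3 s3 inX3.
  case=> [u|] [u'|] //=.
  + exact: (bset_edge sm seG Hcut).
  + rewrite !inE => /orP[/eqP->|/orP[/eqP->|/eqP->]];
      [case: T1|case: T2|case: T3] => a [b [aN bB ab]]; exists b, a; split => //;
      by rewrite seH.
  + rewrite !inE => /orP[/eqP->|/orP[/eqP->|/eqP->]];
      [case: T1|case: T2|case: T3] => a [b [aN bB ab]]; by exists a, b.
Qed.


End W.

Lemma minor_rel8_mem (TG TH : finType) (eG : rel TG) (eH : rel TH) a b c a' b' c' :
  [:: a; b; c] =i [:: a'; b'; c'] ->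
  has_minor eH (rel8 eG a b c) -> has_minor eH (rel8 eG a' b' c').
Proof.
move=> E [beta M]; exists (beta \o id).
apply: (relabel_model (f := id)) M => // [[u|] [v|]] //=; by rewrite E.
Qed.

Lemma minor_split (TG TH : finType) (eG : rel TG) (eH : rel TH) y c2 c3 :
  symmetric eG -> uniq [:: y; c2; c3] ->
  has_minor eH (rel8 eG y c2 c3) -> has_minor eH (split_rel eG y [set c2; c3]).
Proof.
move=> seG U [beta M].
pose f (o : option TG) := match o with
  | Some u => if u == y then None else Some u | None => Some y end.
exists (beta \o f); apply: (relabel_model (f := f)) M.
  case=> [u|] [v|] /=; do ?case: eqP => //=; congruence.
have yn2 : c2 != y by move: U; rewrite /= !inE => /andP[/norP[/negP ? _] _]; apply/eqP => ?; subst.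
have yn3 : c3 != y by move: U; rewrite /= !inE => /andP[/norP[_ /negP ?] _]; apply/eqP => ?; subst.
case=> [a|] [b|] //=.
- case: (eqVneq a y) => [?|ay]; first subst a.
    move=> /andP[]; rewrite !inE => /orP[]/eqP-> _.
      by rewrite (negbTE yn2) /= !inE eqxx !orbT.
    by rewrite (negbTE yn3) /= !inE eqxx !orbT.
  case: (eqVneq b y) => [?|by_]; first subst b.
    by move=> /andP[]; rewrite !inE => /orP[]/eqP-> _ /=; rewrite !inE eqxx !orbT.
  by move=> eab /=.
- case: (eqVneq a y) => [?|ay] /=; first (subst a); first by rewrite !inE eqxx.
  by rewrite /= => /andP[eya _]; rewrite seG.
- case: (eqVneq b y) => [?|by_] /=; first (subst b); first by rewrite !inE eqxx.
  by move=> /andP[].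
Qed.

Section Disks.
Variables (TG : finType) (eG : rel TG) (D : {set {set {set TG}}}).
Implicit Types (X Y : {set {set TG}}).
Hypothesis seG : symmetric eG.
Hypothesis irG : irreflexive eG.
Hypothesis wd : weak_disk_system eG D.

Lemma disk_cycle X : X \in D -> is_cycle eG X.
Proof. by case: wd => [[h _] _] /h. Qed.

Lemma disk_edge X f : X \in D -> f \in X -> exists a b, f = [set a; b] /\ eG a b.
Proof.
move=> /disk_cycle [s [us _ cs ->]] /imsetP[x xs ->].
by exists x, (next s x); split => //; exact: next_cycle.
Qed.

Lemma edge_cv (X : {set {set TG}}) u v : [set u; v] \in X -> u \in cverts X /\ v \in cverts X.
Proof.
by move=> h; split; apply/bigcupP; exists [set u; v]; rewrite // ?set21 ?set22.
Qed.

Lemma edge_cv1 (X : {set {set TG}}) u v : [set u; v] \in X -> u \in cverts X.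
Proof. by case/edge_cv. Qed.
Lemma edge_cv2 (X : {set {set TG}}) u v : [set u; v] \in X -> v \in cverts X.
Proof. by case/edge_cv. Qed.

Lemma cv_edge X u : X \in D -> u \in cverts X -> exists v, eG u v /\ [set u; v] \in X.
Proof.
move=> XD /bigcupP[f fX uf]; case: (disk_edge XD fX) => a [b [fE eab]].
move: uf; rewrite fE => /set2P[]->; first by exists b; rewrite -fE.
by exists a; rewrite setUC -fE seG.
Qed.

Lemma edgeD X u v : X \in D -> [set u; v] \in X -> eG u v.
Proof.
move=> XD h; case: (disk_edge XD h) => a [b [E eab]].
by case/set2_eq: E => [[-> ->]|[-> ->]] //; rewrite seG.
Qed.

Lemma weak2 X Y u v : X \in D -> Y \in D -> X != Y -> u != v ->
  u \in cverts X -> v \in cverts X -> u \in cverts Y -> v \in cverts Y ->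
  [/\ [set u; v] \in X, [set u; v] \in Y &
      forall w, w \in cverts X -> w \in cverts Y -> w = u \/ w = v].
Proof.
move=> XD YD nXY nuv uX vX uY vY.
case: wd => _ /(_ X Y XD YD nXY) [h|[a [b [eab [E1 E2]]]]].
  have : [set u; v] \subset cverts X :&: cverts Y.
    by apply/subsetP => w /set2P[]->; rewrite inE ?uX ?uY ?vX ?vY.
  move/subset_leq_card; rewrite cards2 nuv => h2.
  by have := leq_trans h2 h.
have uab : u \in [set a; b] by rewrite -E1 inE uX uY.
have vab : v \in [set a; b] by rewrite -E1 inE vX vY.
have Euv : [set u; v] = [set a; b].
  move: uab vab nuv => /set2P[]-> /set2P[]->; rewrite ?eqxx // => _.
  by rewrite setUC.
have : [set u; v] \in X :&: Y by rewrite E2 Euv set11.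
rewrite inE => /andP[h1 h2]; split => // w wX wY.
have : w \in [set a; b] by rewrite -E1 inE wX wY.
by rewrite -Euv => /set2P.
Qed.

Lemma deg2 X a b c d : X \in D -> [set a; b] \in X -> [set a; c] \in X ->
  [set a; d] \in X -> [|| b == c, b == d | c == d].
Proof.
move=> /disk_cycle [s [us _ _ ->]].
have key : forall z, [set a; z] \in cycle_edges s -> z = next s a \/ z = prev s a.
  move=> z /imsetP[y ys /set2_eq [[-> ->]|[-> ->]]]; first by left.
  by right; rewrite prev_next.
move=> /key hb /key hc /key hd.
by case: hb hc hd => -> [] -> [] ->; rewrite eqxx ?orbT.
Qed.

End Disks.

Inductive pos (T : Type) := Br of T | In of T & T.
Arguments Br {T}. Arguments In {T}.

Section CL.
Variables (TG : finType) (eG : rel TG) (D : {set {set {set TG}}}).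
Implicit Types (X Y A B Cc : {set {set TG}}) (p : pos TG).
Hypothesis seG : symmetric eG.
Hypothesis irG : irreflexive eG.
Hypothesis wd : weak_disk_system eG D.
Hypothesis conn : forall x y, connect eG x y.
Hypothesis card5 : 5 <= #|TG|.

Definition inD X p := match p with Br u => u \in cverts X | In u v => [set u; v] \in X end.
Definition ends p : seq TG := match p with Br u => [:: u] | In u v => [:: u; v] end.
Definition valid p := match p with Br _ => true | In u v => eG u v end.
Definition admb p1 p2 p3 c1 c2 c3 :=
  [&& c1 \in ends p1, c2 \in ends p2, c3 \in ends p3 & uniq [:: c1; c2; c3]].
Definition adm p1 p2 p3 (cs : seq TG) :=
  exists d1 d2 d3, perm_eq cs [:: d1; d2; d3] /\ admb p1 p2 p3 d1 d2 d3.
Definition indisk c1 c2 c3 :=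
  [exists C in D, [&& c1 \in cverts C, c2 \in cverts C & c3 \in cverts C]].
Definition Out p1 p2 p3 :=
  (exists c1 c2 c3, adm p1 p2 p3 [:: c1; c2; c3] /\ ~~ indisk c1 c2 c3) \/
  (exists c1 c2 c3, adm p1 p2 p3 [:: c1; c2; c3] /\ eG c1 c2 /\ eG c1 c3 /\
     2 <= #|[set u | eG c1 u] :\: [set c2; c3]| /\ ~ conforming eG D c1 [set c2; c3]).

Record Cfg p1 p2 p3 A B Cc : Prop := {
  cf_v1 : valid p1; cf_v2 : valid p2; cf_v3 : valid p3;
  cf_A : A \in D; cf_B : B \in D; cf_C : Cc \in D;
  cf_a1 : inD A p1; cf_a2 : inD A p2; cf_a3 : ~~ inD A p3;
  cf_b1 : inD B p1; cf_b2 : ~~ inD B p2; cf_b3 : inD B p3;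
  cf_c1 : ~~ inD Cc p1; cf_c2 : inD Cc p2; cf_c3 : inD Cc p3;
  cf_no : forall X, X \in D -> ~~ [&& inD X p1, inD X p2 & inD X p3] }.

Lemma perm12 (a b c : TG) : perm_eq [:: a; b; c] [:: b; a; c].
Proof. by apply/permP => f /=; rewrite addnCA. Qed.
Lemma perm23 (a b c : TG) : perm_eq [:: a; b; c] [:: a; c; b].
Proof. by apply/permP => f /=; rewrite !addn0 (addnC (f b)). Qed.

Lemma uniq4P (a b c d : TG) : uniq [:: a; b; c; d] ->
  [/\ a != b, a != c & a != d] /\ [/\ b != c, b != d & c != d].
Proof.
move=> /and4P[h1 h2 h3 _]; move: h1 h2 h3; rewrite !inE !negb_or.
by move=> /and3P[-> -> ->] /andP[-> ->] ->.
Qed.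

Lemma adm_perm p1 p2 p3 cs cs' : perm_eq cs cs' -> adm p1 p2 p3 cs -> adm p1 p2 p3 cs'.
Proof.
move=> pe [d1 [d2 [d3 [pd ad]]]]; exists d1, d2, d3; split => //.
by rewrite perm_sym in pe; apply: perm_trans pe pd.
Qed.

Lemma adm_uniq p1 p2 p3 cs : adm p1 p2 p3 cs -> uniq cs.
Proof.
by move=> [d1 [d2 [d3 [pd /and4P[_ _ _ u]]]]]; rewrite (perm_uniq pd).
Qed.

Lemma adm_swap12 p1 p2 p3 cs : adm p1 p2 p3 cs -> adm p2 p1 p3 cs.
Proof.
move=> [d1 [d2 [d3 [pd /and4P[h1 h2 h3 u]]]]]; exists d2, d1, d3; split.
  exact: perm_trans pd (perm12 _ _ _).
by rewrite /admb h1 h2 h3 (perm_uniq (perm12 d2 d1 d3)).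
Qed.

Lemma adm_swap23 p1 p2 p3 cs : adm p1 p2 p3 cs -> adm p1 p3 p2 cs.
Proof.
move=> [d1 [d2 [d3 [pd /and4P[h1 h2 h3 u]]]]]; exists d1, d3, d2; split.
  exact: perm_trans pd (perm23 _ _ _).
by rewrite /admb h1 h2 h3 (perm_uniq (perm23 d1 d3 d2)).
Qed.

Lemma adm_flip1 u v p2 p3 cs : adm (In u v) p2 p3 cs -> adm (In v u) p2 p3 cs.
Proof.
move=> [d1 [d2 [d3 [pd /and4P[h1 h2 h3 uu]]]]]; exists d1, d2, d3; split => //.
by rewrite /admb h2 h3 uu /= andbT; move: h1; rewrite /= !inE orbC.
Qed.

Lemma Out_swap12 p1 p2 p3 : Out p2 p1 p3 -> Out p1 p2 p3.
Proof.
case=> [[c1 [c2 [c3 [a h]]]]|[c1 [c2 [c3 [a h]]]]];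
  [left|right]; exists c1, c2, c3; split => //; exact: adm_swap12.
Qed.

Lemma Out_swap23 p1 p2 p3 : Out p1 p3 p2 -> Out p1 p2 p3.
Proof.
case=> [[c1 [c2 [c3 [a h]]]]|[c1 [c2 [c3 [a h]]]]];
  [left|right]; exists c1, c2, c3; split => //; exact: adm_swap23.
Qed.

Lemma Out_flip1 u v p2 p3 : Out (In v u) p2 p3 -> Out (In u v) p2 p3.
Proof.
case=> [[c1 [c2 [c3 [a h]]]]|[c1 [c2 [c3 [a h]]]]];
  [left|right]; exists c1, c2, c3; split => //; exact: adm_flip1.
Qed.

Lemma Cfg_swap12 p1 p2 p3 A B Cc : Cfg p1 p2 p3 A B Cc -> Cfg p2 p1 p3 A Cc B.
Proof.
case=> *; split => // X XD; rewrite andbCA; auto.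
Qed.

Lemma Cfg_swap23 p1 p2 p3 A B Cc : Cfg p1 p2 p3 A B Cc -> Cfg p1 p3 p2 B A Cc.
Proof.
case=> *; split => // X XD; rewrite (andbC (inD X p3)); auto.
Qed.

Lemma Cfg_flip1 u v p2 p3 A B Cc : Cfg (In u v) p2 p3 A B Cc -> Cfg (In v u) p2 p3 A B Cc.
Proof.
have sw : forall X, inD X (In v u) = inD X (In u v) by move=> X; rewrite /= setUC.
case=> h1 *; split; rewrite ?sw //.
- by rewrite /= seG.
- by move=> X XD; rewrite sw; auto.
Qed.


Lemma Cfg_flip2 u v p1 p3 A B Cc : Cfg p1 (In u v) p3 A B Cc -> Cfg p1 (In v u) p3 A B Cc.
Proof. by move/Cfg_swap12/Cfg_flip1/Cfg_swap12. Qed.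
Lemma Cfg_flip3 u v p1 p2 A B Cc : Cfg p1 p2 (In u v) A B Cc -> Cfg p1 p2 (In v u) A B Cc.
Proof. by move/Cfg_swap23/Cfg_flip2/Cfg_swap23. Qed.
Lemma Out_flip2 u v p1 p3 : Out p1 (In v u) p3 -> Out p1 (In u v) p3.
Proof. by move/Out_swap12/Out_flip1/Out_swap12. Qed.
Lemma Out_flip3 u v p1 p2 : Out p1 p2 (In v u) -> Out p1 p2 (In u v).
Proof. by move/Out_swap23/Out_flip2/Out_swap23. Qed.

Lemma center y o o' r z Xa Xb : Xa \in D -> Xb \in D ->
  [set y; o] \in Xa -> [set y; r] \in Xa -> [set y; o'] \in Xb -> [set y; r] \in Xb ->
  uniq [:: y; o; o'; r] -> eG y z -> z \notin [:: o; o'; r] ->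
  2 <= #|[set u | eG y u] :\: [set o; o']| /\ ~ conforming eG D y [set o; o'].
Proof.
move=> XaD XbD ho hra ho' hrb U eyz zn.
move: U; rewrite /= !inE !negb_or => /and4P[/and3P[yo yo' yr] /andP[oo' or_] o'r _].
move: zn; rewrite !inE !negb_or => /and3P[zo zo' zr].
have eyr : eG y r by exact: (edgeD seG wd XaD hra).
split.
  have sub : [set r; z] \subset [set u | eG y u] :\: [set o; o'].
    apply/subsetP => w /set2P[]->; rewrite !inE ?eyr ?eyz ?andbT.
      by rewrite negb_or eq_sym or_ eq_sym o'r.
    by rewrite negb_or zo zo'.
  by apply: leq_trans (subset_leq_card sub); rewrite cards2 eq_sym zr.
have nX : Xa != Xb.
  apply/eqP => E; rewrite -E in ho'.
  by have := deg2 wd XaD ho ho' hra; rewrite (negbTE oo') (negbTE or_) (negbTE o'r).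
have inS : forall X u, X \in D -> [set y; u] \in X -> u \in [set o; o'] ->
    [set y; r] \in X ->
    X \in [set C in D | (y \in cverts C) && splits eG y [set o; o'] C].
  move=> X u XD hu un hr; rewrite inE XD (edge_cv1 hu) /splits /=.
  apply/andP; split; apply/existsP; [exists u; by rewrite hu un|exists r].
  by rewrite hr eyr !inE negb_or eq_sym or_ eq_sym o'r.
have aS := inS _ _ XaD ho (set21 _ _) hra.
have bS := inS _ _ XbD ho' (set22 _ _) hrb.
move=> [D1 [D2 [_ [E Ecap]]]].
have rIn : r \in cverts Xa :&: cverts Xb by rewrite inE (edge_cv2 hra) (edge_cv2 hrb).
have : cverts Xa :&: cverts Xb = [set y].
  move: aS bS nX; rewrite E => /set2P[]-> /set2P[]->; rewrite ?eqxx // => _.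
  by rewrite setIC.
by move=> EE; move: rIn; rewrite EE => /set1P ry; rewrite ry eqxx in yr.
Qed.

Lemma outside q1 q2 q3 q4 : exists q z,
  [/\ q \in [:: q1; q2; q3; q4], z \notin [:: q1; q2; q3; q4] & eG q z].
Proof.
set s := [:: q1; q2; q3; q4].
have : ~~ ([set: TG] \subset [set z in s]).
  apply/negP => /subset_leq_card; rewrite cardsT cardsE => h.
  by have := leq_trans card5 (leq_trans h (card_size s)).
case/subsetPn => z0 _; rewrite inE => hz0.
have q1S : q1 \in [set z in s] by rewrite inE !inE eqxx.
have z0S : z0 \notin [set z in s] by rewrite inE.
have [u [v [uA vA euv]]] := leave (conn q1 z0) q1S z0S.
exists u, v; split => //; [move: uA | move: vA]; rewrite inE //.
Qed.


Lemma K4 p1 p2 p3 q1 q2 q3 q4 X1 X2 X3 X4 :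
  X1 \in D -> X2 \in D -> X3 \in D -> X4 \in D -> uniq [:: q1; q2; q3; q4] ->
  [set q1; q2] \in X4 -> [set q1; q3] \in X4 -> [set q2; q3] \in X4 ->
  [set q1; q2] \in X3 -> [set q1; q4] \in X3 -> [set q2; q4] \in X3 ->
  [set q1; q3] \in X2 -> [set q1; q4] \in X2 -> [set q3; q4] \in X2 ->
  [set q2; q3] \in X1 -> [set q2; q4] \in X1 -> [set q3; q4] \in X1 ->
  adm p1 p2 p3 [:: q1; q2; q3] -> adm p1 p2 p3 [:: q4; q1; q2] -> Out p1 p2 p3.
Proof.
move=> X1D X2D X3D X4D U e12 e13 e23 f12 f14 f24 g13 g14 g34 h23 h24 h34 ad1 ad2.
have U' := U.
case/uniq4P: U' => [[n12 n13 n14] [n23 n24 n34]].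
have n21 : q2 != q1 by rewrite eq_sym.
have n31 : q3 != q1 by rewrite eq_sym.
have n41 : q4 != q1 by rewrite eq_sym.
have n32 : q3 != q2 by rewrite eq_sym.
have n42 : q4 != q2 by rewrite eq_sym.
have n43 : q4 != q3 by rewrite eq_sym.
have E := edgeD seG wd.
have [q [z [qin zn eqz]]] := outside q1 q2 q3 q4.
move: zn; rewrite !inE !negb_or => /and4P[z1 z2 z3 z4].
right.
move: qin; rewrite !inE => /or4P[]/eqP Eq; subst q.
- have zn' : z \notin [:: q2; q3; q4] by rewrite !inE !negb_or z2 z3 z4.
  have [c1 c2] := center X3D X2D f12 f14 g13 g14 U eqz zn'.
  by exists q1, q2, q3; split => //; split; [exact: E X4D e12|split; [exact: E X4D e13|]].
- have zn' : z \notin [:: q1; q3; q4] by rewrite !inE !negb_or z1 z3 z4.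
  have f21 : [set q2; q1] \in X3 by rewrite setUC.
  have U2 : uniq [:: q2; q1; q3; q4] by rewrite /= !inE !negb_or n21 n23 n24 n13 n14 n34.
  have [c1 c2] := center X3D X1D f21 f24 h23 h24 U2 eqz zn'.
  exists q2, q1, q3; split; first exact: adm_perm (perm12 _ _ _) ad1.
  by split; [rewrite seG; exact: E X4D e12|split; [exact: E X4D e23|]].
- have zn' : z \notin [:: q1; q2; q4] by rewrite !inE !negb_or z1 z2 z4.
  have g31 : [set q3; q1] \in X2 by rewrite setUC.
  have h32 : [set q3; q2] \in X1 by rewrite setUC.
  have U3 : uniq [:: q3; q1; q2; q4] by rewrite /= !inE !negb_or n31 n32 n34 n12 n14 n24.
  have [c1 c2] := center X2D X1D g31 g34 h32 h34 U3 eqz zn'.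
  exists q3, q1, q2; split; first exact: adm_perm (perm_trans (perm23 _ _ _) (perm12 _ _ _)) ad1.
  by split; [rewrite seG; exact: E X4D e13|split; [rewrite seG; exact: E X4D e23|]].
- have zn' : z \notin [:: q1; q2; q3] by rewrite !inE !negb_or z1 z2 z3.
  have g41 : [set q4; q1] \in X2 by rewrite setUC.
  have g43 : [set q4; q3] \in X2 by rewrite setUC.
  have h42 : [set q4; q2] \in X1 by rewrite setUC.
  have h43 : [set q4; q3] \in X1 by rewrite setUC.
  have U4 : uniq [:: q4; q1; q2; q3] by rewrite /= !inE !negb_or n41 n42 n43 n12 n13 n23.
  have [c1 c2] := center X2D X1D g41 g43 h42 h43 U4 eqz zn'.
  exists q4, q1, q2; split => //.
  by split; [rewrite seG; exact: E X3D f14|split; [rewrite seG; exact: E X3D f24|]].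
Qed.

End CL.

Section Cases.
Variables (TG : finType) (eG : rel TG) (D : {set {set {set TG}}}).
Implicit Types (X Y A B Cc : {set {set TG}}) (p : pos TG).
Hypothesis seG : symmetric eG.
Hypothesis irG : irreflexive eG.
Hypothesis wd : weak_disk_system eG D.
Hypothesis conn : forall x y, connect eG x y.
Hypothesis card5 : 5 <= #|TG|.

Local Notation Out := (Out eG D).
Local Notation adm := (adm (TG := TG)).
Local Notation K4 := (K4 seG wd conn card5).
Local Notation weak2 := (weak2 wd).

Lemma try8 p1 p2 p3 c1 c2 c3 : adm p1 p2 p3 [:: c1; c2; c3] ->
  (forall X, X \in D -> c1 \in cverts X -> c2 \in cverts X -> c3 \in cverts X -> Out p1 p2 p3) ->
  Out p1 p2 p3.
Proof.
move=> ad h; case: (boolP (indisk D c1 c2 c3)).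
  by case/existsP => X /andP[XD /and3P[]]; apply: h.
by move=> ni; left; exists c1, c2, c3.
Qed.

Lemma admI p1 p2 p3 c1 c2 c3 : admb p1 p2 p3 c1 c2 c3 -> adm p1 p2 p3 [:: c1; c2; c3].
Proof. by move=> h; exists c1, c2, c3; split. Qed.

Lemma neq_in_out X (u v : TG) : u \in cverts X -> v \notin cverts X -> u != v.
Proof. by move=> uX; apply: contraNneq => <-. Qed.

Lemma caseBBB u1 u2 u3 A B Cc : Cfg eG D (Br u1) (Br u2) (Br u3) A B Cc -> Out (Br u1) (Br u2) (Br u3).
Proof.
case=> _ _ _ AD BD CD /= a1 a2 a3 b1 b2 b3 c1 c2 c3 no.
left; exists u1, u2, u3; split.
  apply: admI; rewrite /admb /= !inE !eqxx !negb_or /= andbT.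
  by rewrite (neq_in_out b1 b2) (neq_in_out a1 a3) (neq_in_out a2 a3).
by apply/existsP => -[X /andP[XD h]]; move: (no X XD); rewrite /= h.
Qed.

Lemma caseIBB a b w2 w3 A B Cc : Cfg eG D (In a b) (Br w2) (Br w3) A B Cc ->
  Out (In a b) (Br w2) (Br w3).
Proof.
case=> /= eab _ _ AD BD CD a1 a2 a3 b1 b2 b3 c1 c2 c3 no.
have aA := edge_cv1 a1; have bA := edge_cv2 a1.
have aB := edge_cv1 b1; have bB := edge_cv2 b1.
have nab : a != b by apply: contraTneq eab => ->; rewrite irG.
have naw2 : a != w2 by exact: neq_in_out aB b2.
have nbw2 : b != w2 by exact: neq_in_out bB b2.
have naw3 : a != w3 by exact: neq_in_out aA a3.
have nbw3 : b != w3 by exact: neq_in_out bA a3.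
have nw23 : w2 != w3 by exact: neq_in_out a2 a3.
have ad1 : adm (In a b) (Br w2) (Br w3) [:: a; w2; w3].
  by apply: admI; rewrite /admb /= !inE !eqxx /= !negb_or naw2 naw3 nw23.
have ad2 : adm (In a b) (Br w2) (Br w3) [:: b; w2; w3].
  by apply: admI; rewrite /admb /= !inE !eqxx orbT /= !negb_or nbw2 nbw3 nw23.
apply: (try8 ad1) => X XD aX w2X w3X.
apply: (try8 ad2) => Y YD bY w2Y w3Y.
have nXA : X != A by apply: contraTneq w3X => ->.
have nXB : X != B by apply: contraTneq w2X => ->.
have nYA : Y != A by apply: contraTneq w3Y => ->.
have nYB : Y != B by apply: contraTneq w2Y => ->.
have [xa1 xa2 xa3] := weak2 XD AD nXA naw2 aX w2X aA a2.
have [xb1 xb2 _] := weak2 XD BD nXB naw3 aX w3X aB b3.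
have [ya1 ya2 _] := weak2 YD AD nYA nbw2 bY w2Y bA a2.
have [yb1 yb2 _] := weak2 YD BD nYB nbw3 bY w3Y bB b3.
have nXY : X != Y.
  apply/eqP => E; rewrite -E in bY.
  by case: (xa3 b bY bA) => E'; [rewrite E' eqxx in nab|rewrite E' eqxx in nbw2].
have [xy1 xy2 _] := weak2 XD YD nXY nw23 w2X w3X w2Y w3Y.
apply: (@K4 _ _ _ w2 w3 a b B A Y X) => //; try by rewrite setUC.
- by rewrite /= !inE !negb_or nw23 (eq_sym w2 a) naw2 (eq_sym w2 b) nbw2 (eq_sym w3 a) naw3 (eq_sym w3 b) nbw3 nab.
- exact: adm_perm (perm_trans (perm12 _ _ _) (perm23 _ _ _)) ad1.
Qed.


Lemma neqP (T : eqType) (P : pred T) x y : P x -> ~~ P y -> x != y.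
Proof. by move=> px; apply: contraNneq => <-. Qed.

Lemma ne_edge u v : eG u v -> u != v.
Proof. by move=> e; apply: contraTneq e => ->; rewrite irG. Qed.

Lemma caseIIB_share t a b w A B Cc : Cfg eG D (In t a) (In t b) (Br w) A B Cc ->
  Out (In t a) (In t b) (Br w).
Proof.
case=> /= eta etb _ AD BD CD a1 a2 a3 b1 b2 b3 c1 c2 c3 no.
have tA := edge_cv1 a1; have aA := edge_cv2 a1; have bA := edge_cv2 a2.
have tB := edge_cv1 b1; have aB := edge_cv2 b1.
have tC := edge_cv1 c2; have bC := edge_cv2 c2.
have nta := ne_edge eta; have ntb := ne_edge etb.
have nab : a != b by apply: contraNneq c1 => ->.
have naw := neq_in_out aA a3; have nbw := neq_in_out bA a3; have ntw := neq_in_out tA a3.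
have ad : adm (In t a) (In t b) (Br w) [:: a; b; w].
  by apply: admI; rewrite /admb /= !inE !eqxx !orbT /= !negb_or nab naw nbw.
apply: (try8 ad) => Y YD aY bY wY.
have nYA : Y != A by apply: contraTneq wY => ->.
have nAB : A != B by apply: (neqP (P := fun X => [set t; b] \in X)).
have nAC : A != Cc by apply: (neqP (P := fun X => [set t; a] \in X)).
have nBC : B != Cc by rewrite eq_sym; apply: (neqP (P := fun X => [set t; b] \in X)).
have [ya1 ya2 _] := weak2 YD AD nYA nab aY bY aA bA.
have [_ _ hAB] := weak2 AD BD nAB nta tA aA tB aB.
have [_ _ hAC] := weak2 AD CD nAC ntb tA bA tC bC.
have [tw1 tw2 _] := weak2 BD CD nBC ntw tB (b3 : w \in cverts B) tC c3.
have nYB : Y != B.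
  apply/eqP => E; rewrite E in bY.
  by case: (hAB b bA bY) => E'; [rewrite E' eqxx in ntb|rewrite E' eqxx in nab].
have nYC : Y != Cc.
  apply/eqP => E; rewrite E in aY.
  by case: (hAC a aA aY) => E'; [rewrite E' eqxx in nta|rewrite E' eqxx in nab].
have [yb1 yb2 _] := weak2 YD BD nYB naw aY wY aB b3.
have [yc1 yc2 _] := weak2 YD CD nYC nbw bY wY bC c3.
apply: (@K4 _ _ _ a w b t Cc A B Y) => //; try by rewrite setUC.
- by rewrite /= !inE !negb_or naw nab (eq_sym a t) nta (eq_sym w b) nbw (eq_sym w t) ntw (eq_sym b t) ntb.
- exact: adm_perm (perm23 _ _ _) ad.
- apply: adm_perm (perm12 _ _ _) _; apply: admI.
  by rewrite /admb /= !inE !eqxx !orbT /= !negb_or (eq_sym a t) nta naw ntw.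
Qed.

Lemma caseIIB_disj a1 b1 a2 b2 w A B Cc : Cfg eG D (In a1 b1) (In a2 b2) (Br w) A B Cc ->
  a1 != a2 -> a1 != b2 -> b1 != a2 -> b1 != b2 ->
  Out (In a1 b1) (In a2 b2) (Br w).
Proof.
case=> /= e1 e2 _ AD BD CD a1_ a2_ a3 b1_ b2_ b3 c1 c2 c3 no n1 n2 n3 n4.
have a1A := edge_cv1 a1_; have a2A := edge_cv1 a2_; have b2A := edge_cv2 a2_.
have ad1 : adm (In a1 b1) (In a2 b2) (Br w) [:: a1; a2; w].
  apply: admI; rewrite /admb /= !inE !eqxx /= !negb_or n1 (neq_in_out a1A a3).
  by rewrite (neq_in_out a2A a3).
have ad2 : adm (In a1 b1) (In a2 b2) (Br w) [:: a1; b2; w].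
  apply: admI; rewrite /admb /= !inE !eqxx !orbT /= !negb_or n2 (neq_in_out a1A a3).
  by rewrite (neq_in_out b2A a3).
apply: (try8 ad1) => X XD x1 x2 xw.
apply: (try8 ad2) => X' XD' x1' x2' xw'.
have nXA : X != A by apply: contraTneq xw => ->.
have nXA' : X' != A by apply: contraTneq xw' => ->.
have [_ h1 _] := weak2 XD AD nXA n1 x1 x2 a1A a2A.
have [_ h2 _] := weak2 XD' AD nXA' n2 x1' x2' a1A b2A.
have := deg2 wd AD a1_ h1 h2.
by rewrite (negbTE n3) (negbTE n4) (negbTE (ne_edge e2)).
Qed.

Lemma caseIIB a1 b1 a2 b2 w A B Cc : Cfg eG D (In a1 b1) (In a2 b2) (Br w) A B Cc ->
  Out (In a1 b1) (In a2 b2) (Br w).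
Proof.
move=> cf.
case: (eqVneq a1 a2) => [E|n1]; first by subst; exact: caseIIB_share cf.
case: (eqVneq a1 b2) => [E|n2].
  by subst; apply: Out_flip2; apply: caseIIB_share; exact: (Cfg_flip2 seG cf).
case: (eqVneq b1 a2) => [E|n3].
  by subst; apply: Out_flip1; apply: caseIIB_share; exact: (Cfg_flip1 seG cf).
case: (eqVneq b1 b2) => [E|n4].
  subst; apply: Out_flip1; apply: Out_flip2; apply: caseIIB_share.
  exact: (Cfg_flip2 seG (Cfg_flip1 seG cf)).
exact: (caseIIB_disj cf n1 n2 n3 n4).
Qed.


Lemma caseIII_share t a b c A B Cc : Cfg eG D (In t a) (In t b) (In t c) A B Cc ->
  Out (In t a) (In t b) (In t c).
Proof.
case=> /= eta etb etc AD BD CD a1 a2 a3 b1 b2 b3 c1 c2 c3 no.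
have tA := edge_cv1 a1; have aA := edge_cv2 a1; have bA := edge_cv2 a2.
have tB := edge_cv1 b1; have aB := edge_cv2 b1; have cB := edge_cv2 b3.
have tC := edge_cv1 c2; have bC := edge_cv2 c2; have cC := edge_cv2 c3.
have nta := ne_edge eta; have ntb := ne_edge etb; have ntc := ne_edge etc.
have nab : a != b by apply: contraNneq c1 => ->.
have nac : a != c by apply: contraNneq a3 => <-.
have nbc : b != c by apply: contraNneq b2 => ->.
have nAB : A != B by apply: (neqP (P := fun X => [set t; b] \in X)).
have nAC : A != Cc by apply: (neqP (P := fun X => [set t; a] \in X)).
have [_ _ hAB] := weak2 AD BD nAB nta tA aA tB aB.
have [_ _ hAC] := weak2 AD CD nAC ntb tA bA tC bC.
have ad : adm (In t a) (In t b) (In t c) [:: a; b; c].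
  by apply: admI; rewrite /admb /= !inE !eqxx !orbT /= !negb_or nab nac nbc.
apply: (try8 ad) => Y YD aY bY cY.
have nYA : Y != A.
  apply/eqP => E; rewrite E in cY.
  by case: (hAC c cY cC) => E'; [rewrite E' eqxx in ntc|rewrite E' eqxx in nbc].
have nYB : Y != B.
  apply/eqP => E; rewrite E in bY.
  by case: (hAB b bA bY) => E'; [rewrite E' eqxx in ntb|rewrite E' eqxx in nab].
have nYC : Y != Cc.
  apply/eqP => E; rewrite E in aY.
  by case: (hAC a aA aY) => E'; [rewrite E' eqxx in nta|rewrite E' eqxx in nab].
have [ya1 ya2 _] := weak2 YD AD nYA nab aY bY aA bA.
have [yb1 yb2 _] := weak2 YD BD nYB nac aY cY aB cB.
have [yc1 yc2 _] := weak2 YD CD nYC nbc bY cY bC cC.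
apply: (@K4 _ _ _ b c a t B A Cc Y) => //; try by rewrite setUC.
- by rewrite /= !inE !negb_or nbc (eq_sym b a) nab (eq_sym b t) ntb (eq_sym c a) nac (eq_sym c t) ntc (eq_sym a t) nta.
- exact: adm_perm (perm_trans (perm12 _ _ _) (perm23 _ _ _)) ad.
- apply: admI.
  by rewrite /admb /= !inE !eqxx !orbT /= !negb_or ntb ntc nbc.
Qed.

Lemma caseIII_t t a b a3 b3 A B Cc : Cfg eG D (In t a) (In t b) (In a3 b3) A B Cc ->
  Out (In t a) (In t b) (In a3 b3).
Proof.
move=> cf; case: (cf) => /= _ _ e3 AD BD CD a1 a2 a3_ b1 b2 b3_ c1 c2 c3_ no.
have nBC : B != Cc by rewrite eq_sym; apply: (neqP (P := fun X => [set t; b] \in X)).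
have [_ _ h] := weak2 BD CD nBC (ne_edge e3) (edge_cv1 b3_) (edge_cv2 b3_) (edge_cv1 c3_) (edge_cv2 c3_).
case: (h t (edge_cv1 b1) (edge_cv1 c2)) => E; subst.
  exact: caseIII_share cf.
by apply: Out_flip3; apply: caseIII_share; exact: (Cfg_flip3 seG cf).
Qed.

Lemma caseIII12 a1 b1 a2 b2 a3 b3 A B Cc : Cfg eG D (In a1 b1) (In a2 b2) (In a3 b3) A B Cc ->
  [|| a1 == a2, a1 == b2, b1 == a2 | b1 == b2] ->
  Out (In a1 b1) (In a2 b2) (In a3 b3).
Proof.
move=> cf /or4P[]/eqP E; subst.
- exact: caseIII_t cf.
- by apply: Out_flip2; apply: caseIII_t; exact: (Cfg_flip2 seG cf).
- by apply: Out_flip1; apply: caseIII_t; exact: (Cfg_flip1 seG cf).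
- apply: Out_flip1; apply: Out_flip2; apply: caseIII_t.
  exact: (Cfg_flip2 seG (Cfg_flip1 seG cf)).
Qed.

Lemma caseIII_disj a1 b1 a2 b2 a3 b3 A B Cc : Cfg eG D (In a1 b1) (In a2 b2) (In a3 b3) A B Cc ->
  ~~ [|| a1 == a2, a1 == b2, b1 == a2 | b1 == b2] ->
  ~~ [|| a1 == a3, a1 == b3, b1 == a3 | b1 == b3] ->
  ~~ [|| a2 == a3, a2 == b3, b2 == a3 | b2 == b3] ->
  Out (In a1 b1) (In a2 b2) (In a3 b3).
Proof.
case=> /= e1 e2 e3 AD BD CD a1_ a2_ a3_ b1_ b2_ b3_ c1_ c2_ c3_ no.
rewrite !negb_or => /and4P[n1 n2 n3 n4] /and4P[m1 _ _ _] /and4P[k1 _ k3 _].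
have a1A := edge_cv1 a1_; have a2A := edge_cv1 a2_; have b2A := edge_cv2 a2_.
have a3C := edge_cv1 c3_; have a2C := edge_cv1 c2_.
have nAC : A != Cc by apply: (neqP (P := fun X => [set a1; b1] \in X)).
have [_ _ hAC] := weak2 AD CD nAC (ne_edge e2) a2A b2A (edge_cv1 c2_) (edge_cv2 c2_).
have a3A : a3 \notin cverts A.
  apply/negP => h; case: (hAC a3 h a3C) => E.
    by rewrite E eqxx in k1.
  by rewrite E eqxx in k3.
have ad1 : adm (In a1 b1) (In a2 b2) (In a3 b3) [:: a1; a2; a3].
  apply: admI; rewrite /admb /= !inE !eqxx /= !negb_or n1 m1 andbT /=.
  by rewrite (neq_in_out a2A a3A).
have ad2 : adm (In a1 b1) (In a2 b2) (In a3 b3) [:: a1; b2; a3].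
  apply: admI; rewrite /admb /= !inE !eqxx !orbT /= !negb_or n2 m1 /=.
  by rewrite (neq_in_out b2A a3A).
apply: (try8 ad1) => X XD x1 x2 x3.
apply: (try8 ad2) => X' XD' x1' x2' x3'.
have nXA : X != A by apply: contraTneq x3 => ->.
have nXA' : X' != A by apply: contraTneq x3' => ->.
have [_ h1 _] := weak2 XD AD nXA n1 x1 x2 a1A a2A.
have [_ h2 _] := weak2 XD' AD nXA' n2 x1' x2' a1A b2A.
have := deg2 wd AD a1_ h1 h2.
by rewrite (negbTE n3) (negbTE n4) (negbTE (ne_edge e2)).
Qed.

Lemma caseIII a1 b1 a2 b2 a3 b3 A B Cc : Cfg eG D (In a1 b1) (In a2 b2) (In a3 b3) A B Cc ->
  Out (In a1 b1) (In a2 b2) (In a3 b3).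
Proof.
move=> cf.
case: (boolP [|| a1 == a2, a1 == b2, b1 == a2 | b1 == b2]) => h12.
  exact: caseIII12 cf h12.
case: (boolP [|| a1 == a3, a1 == b3, b1 == a3 | b1 == b3]) => h13.
  by apply: Out_swap23; apply: caseIII12 h13; exact: Cfg_swap23 cf.
case: (boolP [|| a2 == a3, a2 == b3, b2 == a3 | b2 == b3]) => h23.
  apply: Out_swap12; apply: Out_swap23; apply: caseIII12 h23.
  exact: Cfg_swap23 (Cfg_swap12 cf).
exact: caseIII_disj cf h12 h13 h23.
Qed.


Lemma CLmain p1 p2 p3 A B Cc : Cfg eG D p1 p2 p3 A B Cc -> Out p1 p2 p3.
Proof.
case: p1 => [u1|a1 b1]; case: p2 => [u2|a2 b2]; case: p3 => [u3|a3 b3] => cf.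
- exact: caseBBB cf.
- exact: Out_swap23 (Out_swap12 (caseIBB (Cfg_swap12 (Cfg_swap23 cf)))).
- exact: Out_swap12 (caseIBB (Cfg_swap12 cf)).
- exact: Out_swap12 (Out_swap23 (caseIIB (Cfg_swap23 (Cfg_swap12 cf)))).
- exact: caseIBB cf.
- exact: Out_swap23 (caseIIB (Cfg_swap23 cf)).
- exact: caseIIB cf.
- exact: caseIII cf.
Qed.

End Cases.

Section Pos.
Variables (TG TH : finType) (eG : rel TG) (eH : rel TH).
Variables (phi : TG -> TH) (Q : TG -> TG -> seq TH) (D : {set {set {set TG}}}).
Hypothesis sm : subdiv_model eG eH phi Q.
Hypothesis seG : symmetric eG.
Hypothesis wd : weak_disk_system eG D.

Definition posrel (h : TH) (p : pos TG) :=
  match p with Br u => h = phi u | In u v => eG u v /\ h \in Q u v end.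

Lemma exists_pos h : Svert eG phi Q h -> exists p, posrel h p.
Proof.
case/orP => [/codomP[u ->]|/existsP[u /existsP[v /andP[e hq]]]].
  by exists (Br u).
by exists (In u v).
Qed.

Lemma posrel_valid h p : posrel h p -> valid eG p.
Proof. by case: p => [u|u v] //= []. Qed.

Lemma posrel_inD h p C : posrel h p -> C \in D -> in_disk' phi Q C h = inD C p.
Proof.
move=> pr CD; apply/idP/idP.
  case/existsP=> a /existsP[b /andP[ab]]; rewrite /segverts !inE => hs.
  have eab := edgeD seG wd CD ab.
  move: hs; case: p pr => [u ->|u v [euv hq]] /= hs.
    case/or3P: hs => [/eqP E|/eqP E|hq].
    - by rewrite (phi_inj sm E); exact: edge_cv1 ab.
    - by rewrite (phi_inj sm E); exact: edge_cv2 ab.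
    - by case: (Q_phi sm eab hq).
  case/or3P: hs => [/eqP E|/eqP E|hq'].
  - by rewrite E in hq; case: (Q_phi sm euv hq).
  - by rewrite E in hq; case: (Q_phi sm euv hq).
  - have E := Q_disj sm eab euv hq' hq. rewrite -E. exact: ab.
case: p pr => [u ->|u v [euv hq]] /=.
  case/(cv_edge seG wd CD) => v [euv uv]; apply/existsP; exists u; apply/existsP; exists v.
  by rewrite uv /segverts !inE eqxx.
move=> uv; apply/existsP; exists u; apply/existsP; exists v.
by rewrite uv /segverts !inE hq !orbT.
Qed.

Lemma posrel_hook h p c : posrel h p -> c \in ends p -> hook eG phi Q c h.
Proof.
case: p => [u ->|u v [euv hq]] /=; first by rewrite inE => /eqP->; left.
rewrite !inE => /orP[]/eqP->; right.
  by exists v.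
by exists u; [rewrite seG | rewrite (Q_rev sm euv) mem_rev].
Qed.

End Pos.

Unset Implicit Arguments.

Theorem lemma5p3 (TG TH : finType) (eG : rel TG) (eH : rel TH)
    (D : {set {set {set TG}}}) (phi : TG -> TH) (Q : TG -> TG -> seq TH) :
  sgraph eG -> sgraph eH ->
  (forall x y, connect eG x y) -> 5 <= #|TG| ->
  (forall v, deg eG v != 2) ->
  weak_disk_system eG D ->
  subdiv_model eG eH phi Q ->
  has_S_triad eG eH phi Q D ->
  (exists a b, a != b /\ ~~ confluent D a b /\ has_minor eH (add_edge eG a b))
  \/ (exists (v : TG) (N1 : {set TG}),
        N1 \subset [set u | eG v u] /\ 2 <= #|N1| /\
        2 <= #|[set u | eG v u] :\: N1| /\
        ~ conforming eG D v N1 /\ has_minor eH (split_rel eG v N1))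
  \/ (exists x1 x2 x3 : TG, uniq [:: x1; x2; x3] /\
        ~~ [exists C in D, [&& x1 \in cverts C, x2 \in cverts C & x3 \in cverts C]] /\
        has_minor eH (rel8 eG x1 x2 x3))
  \/ (exists x y u : TG, eG x y /\
        ~~ [exists C in D, ([set x; y] \in C) && (u \in cverts C)] /\
        has_minor eH (rel9 eG x y u)).
Proof.
move=> [seG irG] [seH irH] conn card5 _ wd sm [x [x1 [x2 [x3 [R1 [R2 [R3 T]]]]]]].
case: T => nSx [/and3P[S1 S2 S3] [U [/andP[P1 _] [/andP[P2 _] [/andP[P3 _]
  [nSR [_ [/and3P[f12 f13 f23] noall]]]]]]]].
have [p1 r1] := exists_pos S1.
have [p2 r2] := exists_pos S2.
have [p3 r3] := exists_pos S3.
have nall : forall C, C \in D -> ~~ [&& in_disk' phi Q C x1, in_disk' phi Q C x2 & in_disk' phi Q C x3].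
  by move=> C CD; apply: contra noall => h; apply/existsP; exists C; rewrite CD.
case/existsP: f12 => A /andP[AD /andP[A1 A2]].
case/existsP: f13 => B /andP[BD /andP[B1 B3]].
case/existsP: f23 => Cc /andP[CD /andP[C2 C3]].
have A3 : ~~ in_disk' phi Q A x3 by move: (nall A AD); rewrite A1 A2.
have B2 : ~~ in_disk' phi Q B x2 by move: (nall B BD); rewrite B1 B3 andbT.
have C1 : ~~ in_disk' phi Q Cc x1 by move: (nall Cc CD); rewrite C2 C3 !andbT.
have I1 := fun C (CD : C \in D) => posrel_inD sm seG wd r1 CD.
have I2 := fun C (CD : C \in D) => posrel_inD sm seG wd r2 CD.
have I3 := fun C (CD : C \in D) => posrel_inD sm seG wd r3 CD.
have cf : Cfg eG D p1 p2 p3 A B Cc.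
  have V1 := posrel_valid r1; have V2 := posrel_valid r2; have V3 := posrel_valid r3.
  split => //; rewrite -?(I1 _ AD) -?(I2 _ AD) -?(I3 _ AD)
    -?(I1 _ BD) -?(I2 _ BD) -?(I3 _ BD) -?(I1 _ CD) -?(I2 _ CD) -?(I3 _ CD) //.
  by move=> X XD; rewrite -(I1 _ XD) -(I2 _ XD) -(I3 _ XD); apply: nall.
have model : forall c1 c2 c3, adm p1 p2 p3 [:: c1; c2; c3] -> has_minor eH (rel8 eG c1 c2 c3).
  move=> c1 c2 c3 [d1 [d2 [d3 [pd /and4P[h1 h2 h3 _]]]]].
  apply: (minor_rel8_mem (perm_mem (_ : perm_eq [:: d1; d2; d3] [:: c1; c2; c3]))).
    by rewrite perm_sym.
  have Hhook : forall p, p \in [:: (x1, d1); (x2, d2); (x3, d3)] -> hook eG phi Q p.2 p.1.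
    move=> p; rewrite !inE => /or3P[]/eqP-> /=.
    - have hh := posrel_hook sm seG r1 h1. exact: hh.
    - exact: (posrel_hook sm seG r2 h2).
    - exact: (posrel_hook sm seG r3 h3).
  have HDE : forall p q, p \in [:: (x1, d1); (x2, d2); (x3, d3)] ->
      q \in [:: (x1, d1); (x2, d2); (x3, d3)] -> p != q -> forall d d',
      eG p.2 d -> eG q.2 d' -> p.1 \in Q p.2 d -> q.1 \in Q q.2 d' ->
      [set p.2; d] != [set q.2; d'].
    move=> p q pX qX npq d d' ed ed' hp hq; apply/negP => /eqP Es.
    have same : forall C, C \in D -> in_disk' phi Q C p.1 = in_disk' phi Q C q.1.
      move=> C CDD.
      rewrite (posrel_inD (p := In p.2 d) sm seG wd _ CDD) //.
      by rewrite (posrel_inD (p := In q.2 d') sm seG wd _ CDD) //= Es.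
    move: pX qX npq same; rewrite !inE => /or3P[]/eqP-> /or3P[]/eqP-> /= npq same.
    all: first [by rewrite eqxx in npq
               | by move: (same B BD); rewrite ?B1 ?(negbTE B2)
               | by move: (same A AD); rewrite ?A1 ?A2 ?(negbTE A3) | idtac].
  by eexists; apply: (W_model sm seG irG seH nSx nSR P1 P2 P3 Hhook HDE).
case: (CLmain seG irG wd conn card5 cf) => [[c1 [c2 [c3 [ad ni]]]]|[c1 [c2 [c3 [ad [e2 [e3 [cd nc]]]]]]]].
  right; right; left; exists c1, c2, c3; split; first exact: adm_uniq ad.
  by split => //; apply: model.
right; left; exists c1, [set c2; c3]; split.
  by apply/subsetP => w /set2P[]->; rewrite inE.
have Uc := adm_uniq ad.
split; first by rewrite cards2; move: Uc; rewrite /= !inE => /and3P[_ ->].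
do 2 (split => //).
exact: minor_split seG Uc (model _ _ _ ad).
Qed.
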